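(* Let $n, r, s, \ell$ be positive integers with $r+s+\ell \leq n$. Fix any matrix $\mathbf{B} \in \mathbb{Z}_2^{(n-\ell)\times \ell}$ and any full column-rank matrix $\mathbf{C} \in \mathbb{Z}_2^{(n-\ell)\times(n-r-\ell)}$, let $\mathbf{A} := \begin{bmatrix} \mathbf{I}_\ell & \mathbf{0} \\ \mathbf{B} & \mathbf{C}\end{bmatrix} \in \mathbb{Z}_2^{n\times(n-r)}$, and let $S_j := \mathrm{ColSpan}(\mathbf{A}^{[j:n-r]})^\perp$ for $j\in[\ell+1]$. Then the following two distributions over tuples of subspaces are identical: 1. Sample $s$ uniformly random linearly independent vectors $\mathbf{v}_1,\ldots,\mathbf{v}_s \in \mathbb{Z}_2^n$ conditioned on $\mathrm{span}\{\mathbf{v}_1,\ldots,\mathbf{v}_s\}\cap S_{\ell+1} = \{0\}$, and output $(T_1,\ldots,T_{\ell+1})$ with $T_j := \mathrm{span}\{S_j, \mathbf{v}_1,\ldots,\mathbf{v}_s\}$. 2. Sample a uniformly random full-rank $\mathbf{M} \in \mathbb{Z}_2^{(n-r-\ell)\times(n-r-\ell)}$ and a uniformly random $\mathbf{M}' \in \mathbb{Z}_2^{(n-r-\ell)\times \ell}$, set $\overline{\mathbf{A}} := \mathbf{A}\cdot\begin{bmatrix}\mathbf{I}_\ell & \mathbf{0}\\ \mathbf{M}' & \mathbf{M}\end{bmatrix}$, and output $(T_1,\ldots,T_{\ell+1})$ with $T_j := \mathrm{ColSpan}\left(\begin{bmatrix}\overline{\mathbf{A}}^{[j:\ell]} &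 \overline{\mathbf{A}}^{[\ell+s+1:n-r]}\end{bmatrix}\right)^\perp$ (for $j=\ell+1$ the first block is empty).
   Context: All linear algebra is over $\mathbb{Z}_2$. For a matrix $\mathbf{M}$, $\mathbf{M}^{[a:b]}$ denotes the submatrix consisting of columns $a$ through $b$ (inclusive; empty if $a>b$). $\mathrm{ColSpan}$ is the column span, and for a subspace $S$, $S^\perp := \{\mathbf{w}: \mathbf{w}^T\mathbf{s}=0\ \forall \mathbf{s}\in S\}$. $[k]=\{1,\dots,k\}$. *)

(* Defs.v *)
(* Vectors of Z_2^n are row
   vectors 'rV['F_2]_n (mxalgebra convention); a subspace is represented by a
   matrix whose row space is the subspace, compared with (_ == _)%MS. *)
From HB Require Import structures.
From mathcomp Require Import all_boot all_order all_algebra.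
Unset Printing Implicit Defensive.
Import GRing.Theory.
Local Open Scope ring_scope.

(* The block matrix has type
   'M_(l + (n-l), l + (n-r-l)); under l + r <= n these sizes are n and n-r,
   and conform_mx returns the block matrix itself (the default 0 is only used
   when the sizes disagree, which never happens under the hypotheses). *)
Definition Amx (n r l : nat) (B : 'M['F_2]_(n - l, l))
    (C : 'M['F_2]_(n - l, n - r - l)) : 'M['F_2]_(n, n - r) :=
  conform_mx 0 (block_mx (1%:M : 'M['F_2]_l) 0 B C).

Definition Gmx (n r l : nat) (M' : 'M['F_2]_(n - r - l, l))
    (M : 'M['F_2]_(n - r - l)) : 'M['F_2]_(n - r) :=
  conform_mx 1%:M (block_mx (1%:M : 'M['F_2]_l) 0 M' M).

(* ColSpan of the submatrix of A made of the columns whose 1-based index k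
   satisfies P k: a matrix whose row space is spanned by those columns
   (column k of A becomes row k; the other rows are zero). *)
Definition ColSpanSel (m k : nat) (A : 'M['F_2]_(m, k)) (P : pred nat)
    : 'M['F_2]_(k, m) :=
  \matrix_(j < k, i < m) (if P j.+1 then A i j else 0).

Definition ColSpanRange (m k : nat) (A : 'M['F_2]_(m, k)) (a b : nat) :=
  ColSpanSel m k A (fun x => (a <= x <= b)%N).

Definition perpmx (m k : nat) (W : 'M['F_2]_(k, m)) : 'M['F_2]_m :=
  kermx W^T.

(* S_j for j in [l+1], indexed by j0 : 'I_(l.+1) with j = j0 + 1. *)
Definition Sj (n r l : nat) (A : 'M['F_2]_(n, n - r)) (j0 : 'I_l.+1)
    : 'M['F_2]_n :=
  perpmx n (n - r) (ColSpanRange n (n - r) A j0.+1 (n - r)).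

Definition good1 (n r s l : nat) (A : 'M['F_2]_(n, n - r))
    (V : 'M['F_2]_(s, n)) : bool :=
  row_free V && (V :&: Sj n r l A ord_max == (0 : 'M['F_2]_n))%MS.

Definition out1 (n r s l : nat) (A : 'M['F_2]_(n, n - r))
    (V : 'M['F_2]_(s, n)) (j0 : 'I_l.+1) : 'M['F_2]_n :=
  (Sj n r l A j0 + V)%MS.

Definition good2 (n r l : nat)
    (MM : 'M['F_2]_(n - r - l) * 'M['F_2]_(n - r - l, l)) : bool :=
  MM.1 \in unitmx.

Definition out2 (n r s l : nat) (A : 'M['F_2]_(n, n - r))
    (MM : 'M['F_2]_(n - r - l) * 'M['F_2]_(n - r - l, l)) (j0 : 'I_l.+1)
    : 'M['F_2]_n :=
  let Abar := A *m Gmx n r l MM.2 MM.1 in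
  perpmx n (n - r) (ColSpanSel n (n - r) Abar
            (fun x => (j0.+1 <= x <= l) || (l + s + 1 <= x <= n - r))%N).

Definition uprob (T : finType) (D E : pred T) : rat :=
  (#|[set x | D x && E x]|%:R / #|[set x | D x]|%:R)%R.

(* Main.v *)
Require Import Defs.
From HB Require Import structures.
From mathcomp Require Import all_boot all_order all_algebra zify.
Set Implicit Arguments. Unset Strict Implicit. Unset Printing Implicit Defensive.
Import GRing.Theory.
Local Open Scope ring_scope.


Definition dsel (F : fieldType) (N : nat) (P : pred 'I_N) : 'M[F]_N :=
  diag_mx (\row_j (P j)%:R).

Lemma dselE (F : fieldType) N (P : pred 'I_N) i j :
  (dsel F P) i j = ((i == j) && P i)%:R.
Proof. rewrite /dsel !mxE; case: (i == j); case: (P i) => //=. Qed.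

Lemma dselM (F : fieldType) N (P Q : pred 'I_N) :
  dsel F P *m dsel F Q = dsel F (fun k => P k && Q k).
Proof.
apply/matrixP => i j; rewrite {1}/dsel mul_diag_mx !mxE.
by case: (i == j); case: (P i); case: (Q i); rewrite /= ?mul1r ?mul0r ?mulr0.
Qed.

Lemma tr_dsel (F : fieldType) N (P : pred 'I_N) : (dsel F P)^T = dsel F P.
Proof. exact: tr_diag_mx. Qed.

Lemma eq_dsel (F : fieldType) N (P Q : pred 'I_N) : P =1 Q -> dsel F P = dsel F Q.
Proof. by move=> e; apply/matrixP => i j; rewrite !dselE e. Qed.

Lemma dsel0 (F : fieldType) N (P : pred 'I_N) : (forall k, P k = false) -> dsel F P = 0.
Proof. by move=> e; apply/matrixP => i j; rewrite !dselE e andbF mxE. Qed.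

Lemma dselT (F : fieldType) N (P : pred 'I_N) : (forall k, P k) -> dsel F P = 1%:M.
Proof. by move=> e; apply/matrixP => i j; rewrite !dselE e andbT mxE. Qed.

Lemma dselD (F : fieldType) N (P Q : pred 'I_N) : (forall k, P k && Q k = false) ->
  dsel F P + dsel F Q = dsel F (fun k => P k || Q k).
Proof.
move=> e; apply/matrixP => i j; rewrite mxE !dselE.
case: (i == j) => //=; last by rewrite addr0.
by move: (e i); case: (P i); case: (Q i); rewrite //= ?addr0 ?add0r.
Qed.

Lemma sub_dsel (F : fieldType) m N (P : pred 'I_N) (X : 'M[F]_(m, N)) :
  (X <= dsel F P)%MS -> X *m dsel F P = X.
Proof. by case/submxP => D ->; rewrite -mulmxA dselM; congr (_ *m _); apply: eq_dsel => k; rewrite andbb. Qed.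

Definition Emx (F : fieldType) (N l s : nat) : 'M[F]_(s, N) :=
  \matrix_(i, j) ((j : nat) == (l + i)%N)%:R.

Lemma EEt (F : fieldType) N l s : (l + s <= N)%N -> Emx F N l s *m (Emx F N l s)^T = 1%:M.
Proof.
move=> h; apply/matrixP => i i'; rewrite !mxE.
have hk : (l + i < N)%N by apply: leq_trans h; rewrite ltn_add2l.
rewrite (bigD1 (Ordinal hk)) //= big1 ?addr0.
  by rewrite !mxE /= eqxx mul1r eqn_add2l.
move=> k /eqP; rewrite !mxE => nk.
have -> : ((k : nat) == (l + i)%N) = false by apply/negP => /eqP e; apply: nk; apply: val_inj.
by rewrite mul0r.
Qed.

Lemma EtE (F : fieldType) N l s :
  (Emx F N l s)^T *m Emx F N l s = dsel F (fun k => (l <= k < l + s)%N).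
Proof.
apply/matrixP => k k'; rewrite dselE !mxE.
case hk: (l <= k < l + s)%N.
  have hi : (k - l < s)%N by case/andP: hk => a b; rewrite ltn_subLR.
  rewrite (bigD1 (Ordinal hi)) //= big1 ?addr0.
    rewrite !mxE /= subnKC; last by case/andP: hk.
    by rewrite eqxx mul1r andbT; case: (k =P k') => [->|ne]; rewrite ?eqxx // ; case: eqP => // e; case: ne; apply: val_inj.
  move=> i /eqP ni; rewrite !mxE.
  have -> : ((k : nat) == (l + i)%N) = false.
    apply/negP => /eqP e; apply: ni; apply: val_inj => /=; rewrite e addKn //.
  by rewrite mul0r.
rewrite andbF big1 // => i _; rewrite !mxE.
have -> : ((k : nat) == (l + i)%N) = false.
  apply/negP => /eqP e; move: hk; rewrite e leq_addr ltn_add2l ltn_ord.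
  by [].
by rewrite mul0r.
Qed.

Lemma invmxM (F : fieldType) N (A B : 'M[F]_N) : A \in unitmx -> B \in unitmx ->
  invmx (A *m B) = invmx B *m invmx A.
Proof.
move=> uA uB; have uAB : A *m B \in unitmx by rewrite unitmx_mul uA.
have e : A *m B *m (invmx B *m invmx A) = 1%:M.
  by rewrite -mulmxA (mulmxA B) (mulmxV uB) mul1mx mulmxV.
by rewrite -[invmx (A *m B)]mulmx1 -e mulmxA (mulVmx uAB) mul1mx.
Qed.

Definition Dlt (F : fieldType) N (j : nat) : 'M[F]_N := dsel F (fun k : 'I_N => (k < j)%N).
Definition Dge (F : fieldType) N (j : nat) : 'M[F]_N := dsel F (fun k : 'I_N => (j <= k)%N).
Definition Dp (F : fieldType) N (l s j : nat) : 'M[F]_N :=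
  dsel F (fun k : 'I_N => (j <= k < l)%N || (l + s <= k)%N).
Definition Emid (F : fieldType) N (l s : nat) : 'M[F]_N :=
  dsel F (fun k : 'I_N => (l <= k < l + s)%N).

Definition inH (F : fieldType) N (l : nat) (G : 'M[F]_N) : bool :=
  (G \in unitmx) && (Dlt F N l *m G == Dlt F N l).
Definition validR (F : fieldType) N (l s : nat) (R : 'M[F]_(s, N)) : bool :=
  row_free (R *m Dge F N l).
Definition psi (F : fieldType) N (l s : nat) (G : 'M[F]_N) : 'M[F]_(s, N) :=
  Emx F N l s *m invmx G.
Definition Kj (F : fieldType) N s (j : nat) (R : 'M[F]_(s, N)) :=
  (Dge F N j :&: kermx R^T)%MS.
Definition outR (F : fieldType) n N s (A : 'M[F]_(n, N)) (j : nat) (R : 'M[F]_(s, N)) :=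
  kermx (A *m (Kj j R)^T).

Lemma Dlt_Dge (F : fieldType) N j : Dlt F N j + Dge F N j = 1%:M.
Proof. by rewrite /Dlt /Dge dselD => [|k]; [apply: dselT => k; lia | apply/negP; lia]. Qed.

Lemma split3 (F : fieldType) N l s j : (j <= l)%N ->
  Dlt F N j + Emid F N l s + Dp F N l s j = 1%:M.
Proof.
move=> h; rewrite /Dlt /Emid /Dp dselD => [|k]; last by apply/negP; lia.
rewrite dselD => [|k]; last by apply/negP; lia.
by apply: dselT => k; lia.
Qed.

Lemma DltDlt (F : fieldType) N j l : (j <= l)%N -> Dlt F N j *m Dlt F N l = Dlt F N j.
Proof. by move=> h; rewrite /Dlt dselM; apply: eq_dsel => k /=; apply/idP/idP; lia. Qed.

Lemma dselM0 (F : fieldType) N (P Q : pred 'I_N) : (forall k, P k && Q k = false) ->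
  dsel F P *m dsel F Q = 0.
Proof. by move=> h; rewrite dselM; apply: dsel0. Qed.

Lemma inH_Dlt (F : fieldType) N l j (G : 'M[F]_N) : inH l G -> (j <= l)%N ->
  Dlt F N j *m G = Dlt F N j /\ Dlt F N j *m invmx G = Dlt F N j.
Proof.
case/andP => uG /eqP hG hj.
have e1 : Dlt F N j *m G = Dlt F N j by rewrite -(DltDlt F N hj) -mulmxA hG.
split => //; by rewrite -{1}e1 mulmxK.
Qed.

Lemma inH1 (F : fieldType) N l : inH l (1%:M : 'M[F]_N).
Proof. by rewrite /inH unitmx1 mulmx1 eqxx. Qed.

Lemma inH_inv (F : fieldType) N l (G : 'M[F]_N) : inH l G -> inH l (invmx G).
Proof.
move=> hG; have [_ e] := inH_Dlt hG (leqnn l).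
by case/andP: hG => uG _; rewrite /inH unitmx_inv uG e eqxx.
Qed.

Lemma inH_mul (F : fieldType) N l (G H : 'M[F]_N) : inH l G -> inH l H -> inH l (G *m H).
Proof.
case/andP => uG /eqP eG /andP [uH /eqP eH].
by rewrite /inH unitmx_mul uG uH mulmxA eG eH eqxx.
Qed.

Lemma EDp (F : fieldType) N l s j : (l + s <= N)%N -> Emx F N l s *m Dp F N l s j = 0.
Proof.
move=> h; rewrite -[Emx F N l s]mul1mx -(EEt F h) -!mulmxA (mulmxA (Emx F N l s)^T) EtE.
by rewrite dselM0 ?mulmx0 // => k; apply/negP; lia.
Qed.

Lemma EDlt (F : fieldType) N l s : (l + s <= N)%N -> Emx F N l s *m Dlt F N l = 0.
Proof.
move=> h; rewrite -[Emx F N l s]mul1mx -(EEt F h) -!mulmxA (mulmxA (Emx F N l s)^T) EtE.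
by rewrite dselM0 ?mulmx0 // => k; apply/negP; lia.
Qed.

Lemma EDge (F : fieldType) N l s j : (l + s <= N)%N -> (j <= l)%N ->
  Emx F N l s *m Dge F N j = Emx F N l s.
Proof.
move=> h hj; rewrite -[Emx F N l s]mul1mx -(EEt F h) -!mulmxA (mulmxA (Emx F N l s)^T) EtE dselM.
rewrite (_ : dsel _ _ = Emid F N l s); last by apply: eq_dsel => k /=; apply/idP/idP; lia.
by rewrite /Emid -EtE mulmxA EEt // mul1mx.
Qed.

Lemma psi_valid (F : fieldType) N l s (G : 'M[F]_N) : inH l G -> (l + s <= N)%N ->
  validR l (psi l s G).
Proof.
move=> hG h; have [e1 _] := inH_Dlt hG (leqnn l).
case/andP: hG => uG _.
rewrite /validR -kermx_eq0; set K := kermx _.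
have hK : K *m (psi l s G *m Dge F N l) = 0 by exact: mulmx_ker.
set X := K *m psi l s G.
have hX : X *m Dge F N l = 0 by rewrite /X -mulmxA.
have hX2 : X = X *m Dlt F N l by rewrite -[X in LHS]mulmx1 -(Dlt_Dge F N l) mulmxDr hX addr0.
have hKE : K *m Emx F N l s = X.
  by rewrite -[LHS](mulmxKV uG) -(mulmxA K) -/(psi l s G) -/X hX2 -mulmxA e1.
have hKE0 : K *m Emx F N l s = 0 by rewrite -(EDge F h (leqnn l)) mulmxA hKE hX.
by rewrite -[K]mulmx1 -(EEt F h) mulmxA hKE0 mul0mx.
Qed.

Lemma kermx_resp (F : fieldType) n N m1 m2 (A : 'M[F]_(n, N)) (X : 'M[F]_(m1, N)) (Y : 'M[F]_(m2, N)) :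
  (X <= Y)%MS -> (kermx (A *m Y^T) <= kermx (A *m X^T))%MS.
Proof.
case/submxP => D ->; apply/sub_kermxP.
by rewrite trmx_mul (mulmxA A) mulmxA mulmx_ker mul0mx.
Qed.

Lemma kermx_resp_eq (F : fieldType) n N m1 m2 (A : 'M[F]_(n, N)) (X : 'M[F]_(m1, N)) (Y : 'M[F]_(m2, N)) :
  (X :=: Y)%MS -> (kermx (A *m X^T) :=: kermx (A *m Y^T))%MS.
Proof.
move=> e; apply/eqmxP; rewrite /eqmx.
by rewrite !kermx_resp // e ?submx_refl.
Qed.

Lemma trDlt (F : fieldType) N j : (Dlt F N j)^T = Dlt F N j. Proof. exact: tr_dsel. Qed.
Lemma trDp (F : fieldType) N l s j : (Dp F N l s j)^T = Dp F N l s j. Proof. exact: tr_dsel. Qed.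

Lemma LK (F : fieldType) N l s j (G : 'M[F]_N) : inH l G -> (j <= l)%N -> (l + s <= N)%N ->
  (Dp F N l s j *m G^T :=: Kj j (psi l s G))%MS.
Proof.
move=> hG hj h; have [e1 e2] := inH_Dlt hG hj.
case/andP: (hG) => uG _.
have uGt : G^T \in unitmx by rewrite unitmx_tr.
apply/eqmxP; rewrite /eqmx; apply/andP; split.
  rewrite sub_capmx; apply/andP; split.
    set X := Dp F N l s j *m G^T.
    have hX : X *m Dlt F N j = 0.
      rewrite /X -mulmxA -[Dlt F N j]trDlt -trmx_mul e1.
      by rewrite trDlt /Dp /Dlt dselM0 // => k; apply/negP; lia.
    have -> : X = X *m Dge F N j by rewrite -[X in LHS]mulmx1 -(Dlt_Dge F N j) mulmxDr hX add0r.
    exact: submxMl.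
  apply/sub_kermxP; rewrite /psi trmx_mul -mulmxA (mulmxA G^T) -trmx_mul (mulVmx uG) trmx1 mul1mx.
  by rewrite -[Dp _ _ _ _ _]trDp -trmx_mul EDp // trmx0.
set K := Kj j (psi l s G).
have hK1 : K *m Dge F N j = K by apply: sub_dsel; exact: capmxSl.
have hK2 : K *m (psi l s G)^T = 0 by apply/sub_kermxP; exact: capmxSr.
set Y := K *m invmx G^T.
have hY : Y *m G^T = K by rewrite /Y mulmxKV.
have hY1 : Y *m Dlt F N j = 0.
  rewrite /Y -trmx_inv -mulmxA -[Dlt F N j]trDlt -trmx_mul e2 trDlt.
  by rewrite -hK1 -mulmxA /Dlt /Dge dselM0 ?mulmx0 // => k; apply/negP; lia.
have hY2 : Y *m Emid F N l s = 0.
  rewrite /Emid -EtE mulmxA /Y -trmx_inv -(mulmxA K) -trmx_mul -/(psi l s G) hK2.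
  by rewrite mul0mx.
have hY3 : Y = Y *m Dp F N l s j.
  by rewrite -[Y in LHS]mulmx1 -(split3 F N s hj) !mulmxDr hY1 hY2 !add0r.
by rewrite -hY hY3 -mulmxA submxMl.
Qed.

Lemma L1 (F : fieldType) n N l s j (A : 'M[F]_(n, N)) (V : 'M[F]_(s, n)) (Q : 'M[F]_N) :
  inH l Q -> Emx F N l s *m Q = V *m A -> (j <= l)%N -> (l + s <= N)%N ->
  (kermx (A *m Dge F N j) + V :=: kermx (A *m invmx Q *m Dp F N l s j))%MS.
Proof.
move=> hQ hR hj h.
have [e1 e2] := inH_Dlt hQ hj.
case/andP: (hQ) => uQ _.
apply/eqmxP; rewrite /eqmx; apply/andP; split.
  rewrite addsmx_sub; apply/andP; split; apply/sub_kermxP.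
    set W := kermx _.
    have hW : W *m (A *m Dge F N j) = 0 by exact: mulmx_ker.
    have hWA : W *m A = W *m A *m Dlt F N j.
      by rewrite -[W *m A in LHS]mulmx1 -(Dlt_Dge F N j) mulmxDr -(mulmxA W A (Dge _ _ _)) hW addr0.
    rewrite !mulmxA hWA -(mulmxA _ (Dlt _ _ _)) e2 -mulmxA /Dlt /Dp dselM0 ?mulmx0 //.
    by move=> k; apply/negP; lia.
  by rewrite !mulmxA -hR mulmxK // EDp.
set W2 := kermx _.
have hW2 : W2 *m (A *m invmx Q *m Dp F N l s j) = 0 by exact: mulmx_ker.
set Z := W2 *m A *m invmx Q.
have hZQ : Z *m Q = W2 *m A by rewrite /Z mulmxKV.
have hZ : Z = Z *m Dlt F N j + Z *m Emid F N l s.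
  rewrite -[Z in LHS]mulmx1 -(split3 F N s hj) !mulmxDr.
  have hZp : Z *m Dp F N l s j = 0 by rewrite /Z -hW2 !mulmxA.
  by rewrite hZp addr0.
have hW2A : W2 *m (A *m Dge F N j) = Z *m (Emx F N l s)^T *m V *m (A *m Dge F N j).
  rewrite mulmxA -hZQ {1}hZ mulmxDl -(mulmxA _ (Dlt _ _ _)) e1 mulmxDl.
  rewrite -(mulmxA Z (Dlt _ _ _)) /Dlt /Dge dselM0 ?mulmx0; last by move=> k; apply/negP; lia.
  rewrite add0r /Emid -EtE (mulmxA Z) -(mulmxA (Z *m _) (Emx _ _ _ _)) hR.
  by rewrite !mulmxA.
rewrite -[W2](subrK (Z *m (Emx F N l s)^T *m V)).
apply: addmx_sub_adds; last exact: submxMl.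
by apply/sub_kermxP; rewrite mulmxBl hW2A subrr.
Qed.

Lemma Dlt_pid (F : fieldType) N j : Dlt F N j = pid_mx j.
Proof. by apply/matrixP => a b; rewrite /Dlt dselE mxE. Qed.

Lemma rank_Dlt (F : fieldType) N j : (j <= N)%N -> \rank (Dlt F N j) = j.
Proof. by move=> h; rewrite Dlt_pid rank_pid_mx. Qed.

Lemma ETail (F : fieldType) N l s : (l + s <= N)%N -> Emx F N l s *m Dge F N (l + s) = 0.
Proof.
move=> h; rewrite -[Emx F N l s]mul1mx -(EEt F h) -!mulmxA (mulmxA (Emx F N l s)^T) EtE.
by rewrite /Dge dselM0 ?mulmx0 // => k; apply/negP; lia.
Qed.

Lemma surj (F : fieldType) N l s (R : 'M[F]_(s, N)) : validR l R -> (l + s <= N)%N ->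
  exists Q, inH l Q && (Emx F N l s *m Q == R).
Proof.
move=> hv h.
set E := Emx F N l s.
set P0 := Dlt F N l + E^T *m R.
set Dt := Dge F N (l + s).
have EDl : E *m Dlt F N l = 0 by exact: EDlt.
have EDt : E *m Dt = 0 by exact: ETail.
have hEE : E *m E^T = 1%:M by exact: EEt.
have DlDl : Dlt F N l *m Dlt F N l = Dlt F N l by rewrite DltDlt.
have DlDt : Dlt F N l *m Dt = 0 by rewrite /Dlt /Dt /Dge dselM0 // => k; apply/negP; lia.
have DtDl : Dt *m Dlt F N l = 0 by rewrite /Dlt /Dt /Dge dselM0 // => k; apply/negP; lia.
have DtDt : Dt *m Dt = Dt by rewrite /Dt /Dge dselM; apply: eq_dsel => k; rewrite andbb.
have DlEt : Dlt F N l *m E^T = 0 by rewrite -trDlt -trmx_mul EDl trmx0.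
have DtEt : Dt *m E^T = 0 by rewrite -[Dt]tr_dsel -trmx_mul EDt trmx0.
have DtP0 : Dt *m P0 = 0 by rewrite /P0 mulmxDr DtDl mulmxA DtEt mul0mx addr0.
have hRD : \rank (R *m Dge F N l) = s by move: hv; rewrite /validR /row_free => /eqP.
have rkR : \rank R = s.
  apply/eqP; rewrite eqn_leq rank_leq_row /= -{1}hRD; exact: mxrankM_maxl.
have rkER : (s <= \rank (E^T *m R))%N.
  by rewrite -{1}rkR -{1}[R]mul1mx -hEE -mulmxA mxrankM_maxr.
have cap0 : (Dlt F N l :&: E^T *m R)%MS = 0.
  set X := (_ :&: _)%MS.
  have hX1 : X *m Dlt F N l = X by apply: sub_dsel; exact: capmxSl.
  have : (X <= E^T *m R)%MS by exact: capmxSr.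
  case/submxP => D hD.
  have : D *m E^T *m (R *m Dge F N l) = 0.
    rewrite !mulmxA -(mulmxA D) -hD -hX1 -mulmxA /Dlt /Dge dselM0 ?mulmx0 //.
    by move=> k; apply/negP; lia.
  move/eqP; rewrite mulmx_free_eq0 // => /eqP hD0.
  by rewrite hD mulmxA hD0 mul0mx.
have rkP0 : (l + s <= \rank P0)%N.
  have sub1 : (Dlt F N l <= P0)%MS.
    have -> : Dlt F N l = Dlt F N l *m P0 by rewrite /P0 mulmxDr DlDl mulmxA DlEt mul0mx addr0.
    exact: submxMl.
  have sub2 : (E^T *m R <= P0)%MS.
    have -> : E^T *m R = (E^T *m E) *m P0.
      by rewrite /P0 mulmxDr -mulmxA EDl mulmx0 add0r -!mulmxA (mulmxA E) hEE mul1mx.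
    exact: submxMl.
  have := mxrank_sum_cap (Dlt F N l) (E^T *m R).
  rewrite cap0 mxrank0 addn0 rank_Dlt; last by lia.
  move=> e; have : (\rank (Dlt F N l + E^T *m R)%MS <= \rank P0)%N.
    by apply: mxrankS; rewrite addsmx_sub sub1.
  lia.
have rkDt : (N - (l + s) <= \rank Dt)%N.
  have e := Dlt_Dge F N (l + s).
  have : (\rank (1%:M : 'M[F]_N) <= \rank (Dlt F N (l + s)) + \rank Dt)%N.
    rewrite -e; apply: leq_trans (mxrank_adds_leqif _ _).
    by apply: mxrankS; apply: addmx_sub_adds; exact: submx_refl.
  by rewrite mxrank1 rank_Dlt //; lia.
set Cm := (P0^C)%MS.
have rkCm : (\rank Cm <= \rank Dt)%N by rewrite mxrank_compl; lia.
set Z := invmx (row_ebase Dt) *m pid_mx (\rank Cm) *m row_ebase Cm.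
have hDtZ : Dt *m Z = col_ebase Dt *m pid_mx (\rank Cm) *m row_ebase Cm.
  rewrite /Z -{1}(mulmx_ebase Dt) !mulmxA mulmxK ?row_ebase_unit //.
  have e : (pid_mx (\rank Dt) : 'M[F]_N) *m (pid_mx (\rank Cm) : 'M[F]_N) = pid_mx (\rank Cm).
    by rewrite mul_pid_mx (minn_idPr rkCm) (minn_idPr (leq_trans rkCm (rank_leq_col _))).
  by congr (_ *m _); rewrite -mulmxA e.
have CmDtZ : (Cm <= Dt *m Z)%MS.
  have -> : Cm = (col_ebase Cm *m invmx (col_ebase Dt)) *m (Dt *m Z).
    by rewrite hDtZ !mulmxA mulmxKV ?col_ebase_unit // mulmx_ebase.
  exact: submxMl.
set Q := P0 + Dt *m Z.
have DtQ : Dt *m Q = Dt *m Z by rewrite /Q mulmxDr DtP0 add0r mulmxA DtDt.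
have P0Q : P0 = Dlt F N (l + s) *m Q.
  have e : Dlt F N (l + s) = 1%:M - Dt by rewrite -(Dlt_Dge F N (l + s)) addrK.
  by rewrite e mulmxBl mul1mx DtQ /Q addrK.
exists Q; apply/andP; split; last first.
  by rewrite /Q mulmxDr /P0 mulmxDr EDl add0r mulmxA hEE mul1mx mulmxA EDt mul0mx addr0.
rewrite /inH; apply/andP; split; last first.
  by rewrite /Q /P0 !mulmxDr DlDl mulmxA DlEt mul0mx addr0 mulmxA DlDt mul0mx addr0.
rewrite -row_full_unit /row_full eqn_leq rank_leq_col /=.
have : row_full (P0 + Cm)%MS by exact: addsmx_compl_full.
rewrite /row_full => /eqP e; apply: (@leq_trans (\rank (P0 + Cm)%MS)); first by rewrite e.
apply: mxrankS; rewrite addsmx_sub; apply/andP; split.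
  by rewrite P0Q submxMl.
by apply: submx_trans CmDtZ _; rewrite -DtQ submxMl.
Qed.

Lemma card_set_sum (T : finType) (P : pred T) : #|[set x | P x]| = (\sum_(x | P x) 1)%N.
Proof. by rewrite -sum1_card; apply: eq_bigl => x; rewrite inE. Qed.

Lemma card_fiber (D Z : finType) (f : D -> Z) (PD : pred D) (PZ : pred Z) (Ev : pred Z) (c : nat) :
  (forall x, PD x -> PZ (f x)) ->
  (forall z, PZ z -> #|[set x | PD x && (f x == z)]| = c) ->
  #|[set x | PD x && Ev (f x)]| = (c * #|[set z | PZ z && Ev z]|)%N.
Proof.
move=> hP hf; rewrite !card_set_sum (partition_big f (fun z => PZ z && Ev z)) /=; last first.
  by move=> x /andP [a b]; rewrite hP.
rewrite big_distrr /=; apply: eq_bigr => z /andP [hz he].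
rewrite muln1 -(hf z hz) card_set_sum; apply: eq_bigl => x.
by case: eqP => [->|]; rewrite ?he ?andbT ?andbF.
Qed.

Lemma card_transport (D Z : finType) (g : D -> Z) (PD : pred D) (PZ : pred Z) (Ev : pred Z) :
  injective g -> (forall x, PD x -> PZ (g x)) -> (forall z, PZ z -> exists2 x, PD x & g x = z) ->
  #|[set x | PD x && Ev (g x)]| = #|[set z | PZ z && Ev z]|.
Proof.
move=> ig h1 h2.
have -> : [set z | PZ z && Ev z] = g @: [set x | PD x && Ev (g x)].
  apply/setP => z; rewrite inE; apply/idP/imsetP.
    by case/andP => /h2 [x hx <-] he; exists x; rewrite // inE hx.
  by case=> x; rewrite inE => /andP [hx he] ->; rewrite h1.
by rewrite card_imset.
Qed.

Lemma eqmx_eqT (F : fieldType) m1 m2 m3 n (X : 'M[F]_(m1,n)) (Y : 'M[F]_(m2,n)) (T : 'M[F]_(m3,n)) :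
  (X :=: Y)%MS -> (X == T)%MS = (Y == T)%MS.
Proof.
move=> e; apply/eqmxP/eqmxP => e2; first exact: eqmx_trans (eqmx_sym e) e2.
exact: eqmx_trans e e2.
Qed.

Lemma set_congr (T : finType) (P E1 E2 : pred T) : (forall x, P x -> E1 x = E2 x) ->
  [set x | P x && E1 x] = [set x | P x && E2 x].
Proof. by move=> h; apply/setP => x; rewrite !inE; case hx: (P x) => //=; exact: h. Qed.

Lemma ratio_simpl (c a b : nat) : (0 < c)%N ->
  ((c * a)%N%:R / (c * b)%N%:R : rat) = a%:R / b%:R.
Proof.
move=> hc; rewrite !natrM -mulf_div divff ?mul1r //.
by rewrite Num.Theory.pnatr_eq0 -lt0n.
Qed.

Lemma good_valid (F : fieldType) n N l s (A : 'M[F]_(n, N)) (V : 'M[F]_(s, n)) :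
  row_free V && (V :&: kermx (A *m Dge F N l) == (0 : 'M[F]_n))%MS = validR l (V *m A).
Proof.
rewrite /validR /row_free sub0mx andbT submx0 -mxrank_eq0 -mulmxA.
have e := mxrank_mul_ker V (A *m Dge F N l).
have h := rank_leq_row V.
apply/andP/eqP => [[/eqP ha /eqP hc] | hb]; [lia | split; apply/eqP; lia].
Qed.

Lemma out_eq2 (F : fieldType) n N l s (A : 'M[F]_(n, N)) (G : 'M[F]_N) (j : 'I_l.+1) :
  inH l G -> (l + s <= N)%N ->
  (kermx (A *m G *m Dp F N l s j) :=: outR A j (psi l s G))%MS.
Proof.
move=> hG h.
have -> : A *m G *m Dp F N l s j = A *m (Dp F N l s j *m G^T)^T.
  by rewrite trmx_mul trmxK trDp mulmxA.
by apply: kermx_resp_eq; apply: LK => //; rewrite -ltnS.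
Qed.

Lemma out_eq1 (F : fieldType) n N l s (A : 'M[F]_(n, N)) (V : 'M[F]_(s, n)) (j : 'I_l.+1) :
  validR l (V *m A) -> (l + s <= N)%N ->
  (kermx (A *m Dge F N j) + V :=: outR A j (V *m A))%MS.
Proof.
move=> hv h; have [Q /andP [hQ /eqP hEQ]] := surj hv h.
have hj : (j <= l)%N by rewrite -ltnS.
apply: eqmx_trans (L1 hQ hEQ hj h) _.
have -> : V *m A = psi l s (invmx Q) by rewrite /psi invmxK hEQ.
exact: out_eq2 (inH_inv hQ) h.
Qed.

Theorem gen (n N l s d : nat) (A : 'M['F_2]_(n, N)) (gm : 'M['F_2]_d * 'M['F_2]_(d, l) -> 'M['F_2]_N)
  (T : 'I_l.+1 -> 'M['F_2]_n) :
  row_full A -> (l + s <= N)%N ->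
  (forall MM, MM.1 \in unitmx -> inH l (gm MM)) -> injective gm ->
  (forall G, inH l G -> exists2 MM, MM.1 \in unitmx & gm MM = G) ->
  uprob _ (fun V : 'M['F_2]_(s, n) => row_free V && (V :&: kermx (A *m Dge _ N l) == (0 : 'M['F_2]_n))%MS)
     (fun V => [forall j : 'I_l.+1, (kermx (A *m Dge _ N j) + V == T j)%MS])
  = uprob _ (fun MM : 'M['F_2]_d * 'M['F_2]_(d, l) => MM.1 \in unitmx)
     (fun MM => [forall j : 'I_l.+1, (kermx (A *m gm MM *m Dp _ N l s j) == T j)%MS]).
Proof.
move=> hA h gm1 gm2 gm3.
set PD := fun V : 'M['F_2]_(s, n) => row_free V && (V :&: kermx (A *m Dge _ N l) == (0 : 'M['F_2]_n))%MS.
set E1 := fun V : 'M['F_2]_(s, n) => [forall j : 'I_l.+1, (kermx (A *m Dge _ N j) + V == T j)%MS].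
set E2 := fun MM : 'M['F_2]_d * 'M['F_2]_(d, l) => [forall j : 'I_l.+1, (kermx (A *m gm MM *m Dp _ N l s j) == T j)%MS].
set Ev := fun R : 'M['F_2]_(s, N) => [forall j : 'I_l.+1, (outR A j R == T j)%MS].
set PZ := fun R : 'M['F_2]_(s, N) => validR l R.
set a := #|[set z | PZ z && Ev z]|.
set b := #|[set z | PZ z && (fun _ => true) z]|.
have [L hL] := row_fullP hA.
set c1 := #|[set X : 'M['F_2]_(s, n) | X *m A == 0]|.
have fib1 : forall R, PZ R ->
   #|[set V | PD V && (V *m A == R)]| = c1.
  move=> R hR.
  have -> : [set V | PD V && (V *m A == R)]
      = (fun X => X + R *m L) @: [set X : 'M['F_2]_(s, n) | X *m A == 0].
    apply/setP => V; rewrite inE /PD good_valid; apply/idP/imsetP.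
      case/andP => _ /eqP hV; exists (V - R *m L); last by rewrite subrK.
      by rewrite inE mulmxBl hV -mulmxA hL mulmx1 subrr.
    case=> X; rewrite inE => /eqP hX ->.
    by rewrite mulmxDl hX add0r -mulmxA hL mulmx1 eqxx andbT.
  by rewrite card_imset //; apply: addIr.
have c1pos : (0 < c1)%N by rewrite /c1 card_gt0; apply/set0Pn; exists 0; rewrite inE mul0mx.
have L1n : #|[set V | PD V && E1 V]| = (c1 * a)%N.
  rewrite (@set_congr _ PD E1 (fun V => Ev (V *m A))); last first.
    move=> V; rewrite /PD good_valid => hv; apply: eq_forallb => j.
    by apply: eqmx_eqT; apply: out_eq1.
  apply: card_fiber => //; by move=> V; rewrite /PD good_valid.
have L1d : #|[set V : 'M['F_2]_(s, n) | PD V]| = (c1 * b)%N.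
  rewrite -(@card_fiber _ _ (fun V => V *m A) PD PZ (fun _ => true) c1) //.
    by apply: eq_card => V; rewrite !inE andbT.
  by move=> V; rewrite /PD good_valid.
set E := Emx 'F_2 N l s.
set c2 := #|[set G | inH l G && (psi l s G == E)]|.
have fib2 : forall R, PZ R -> #|[set G | inH l G && (psi l s G == R)]| = c2.
  move=> R hR; have [Q /andP [hQ /eqP hEQ]] := surj hR h.
  case/andP: (hQ) => uQ _.
  have -> : [set G | inH l G && (psi l s G == R)] = (mulmx (invmx Q)) @: [set G | inH l G && (psi l s G == E)].
    apply/setP => G; rewrite inE; apply/idP/imsetP.
      case/andP => hG /eqP hpG; exists (Q *m G); last by rewrite mulKmx.
      rewrite inE inH_mul //=; case/andP: (hG) => uG _.
      by rewrite /psi invmxM // mulmxA -/(psi l s G) hpG -hEQ mulmxK.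
    case=> X; rewrite inE => /andP [hX /eqP hpX] ->.
    rewrite inH_mul ?inH_inv //=; case/andP: (hX) => uX _.
    by rewrite /psi invmxM ?unitmx_inv // invmxK mulmxA -/(psi l s X) hpX hEQ.
  rewrite card_imset // => X Y e.
  by rewrite -(mulKVmx uQ X) e mulKVmx.
have c2pos : (0 < c2)%N.
  rewrite /c2 card_gt0; apply/set0Pn; exists 1%:M; rewrite inE; apply/andP; split; first exact: inH1.
  by rewrite /psi invmx1 mulmx1.
set Ev2 := fun G : 'M['F_2]_N => [forall j : 'I_l.+1, (kermx (A *m G *m Dp _ N l s j) == T j)%MS].
have R1n : #|[set MM : 'M['F_2]_d * 'M['F_2]_(d, l) | (MM.1 \in unitmx) && E2 MM]| = (c2 * a)%N.
  rewrite (@card_transport _ _ gm _ (inH l) Ev2) //.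
  rewrite (@set_congr _ (inH l) Ev2 (fun G => Ev (psi l s G))); last first.
    move=> G hG; apply: eq_forallb => j.
    by apply: eqmx_eqT; apply: out_eq2.
  apply: card_fiber => // G hG; exact: psi_valid.
have R1d : #|[set MM : 'M['F_2]_d * 'M['F_2]_(d, l) | (MM.1 \in unitmx)]| = (c2 * b)%N.
  have e1 := @card_transport _ _ gm (fun MM => MM.1 \in unitmx) (inH l) (fun _ => true) gm2 gm1 gm3.
  have e2 := @card_fiber _ _ (psi l s) (inH l) PZ (fun _ => true) c2 (fun G hG => psi_valid hG h) fib2.
  have e0 : #|[set MM : 'M['F_2]_d * 'M['F_2]_(d, l) | (MM.1 \in unitmx)]|
          = #|[set MM : 'M['F_2]_d * 'M['F_2]_(d, l) | (MM.1 \in unitmx) && true]|.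
    by apply: eq_card => x; rewrite !inE andbT.
  by rewrite e0 e1 e2.
rewrite /uprob L1n L1d R1n R1d (ratio_simpl _ _ c1pos).
by rewrite (ratio_simpl _ _ c2pos).
Qed.
Lemma Gprops (F : fieldType) (l d N : nat) (e : (l + d)%N = N) :
  let gm := fun MM : 'M[F]_d * 'M[F]_(d, l) =>
     conform_mx (1%:M : 'M[F]_N) (block_mx (1%:M : 'M[F]_l) 0 MM.2 MM.1) in
  [/\ (forall MM, MM.1 \in unitmx -> inH l (gm MM)), injective gm &
      (forall G, inH l G -> exists2 MM, MM.1 \in unitmx & gm MM = G)].
Proof.
case: N / e => gm.
have gmE : forall MM, gm MM = block_mx 1%:M 0 MM.2 MM.1 by move=> MM; rewrite /gm conform_mx_id.
have DltE : Dlt F (l + d) l = block_mx 1%:M 0 0 0 by rewrite Dlt_pid pid_mx_block.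
split.
- move=> [M M'] /= uM; rewrite gmE /inH unitmxE det_lblock det1 mul1r -unitmxE uM /=.
  by rewrite DltE mulmx_block ?mul1mx ?mul0mx ?addr0 ?mulmx0 ?addr0.
- move=> [M1 M1'] [M2 M2']; rewrite !gmE => /eq_block_mx [_ _ /= e1 e2].
  by rewrite e1 e2.
- move=> G /andP [uG /eqP hG].
  rewrite -(submxK G) DltE mulmx_block ?mul1mx ?mul0mx ?addr0 in hG.
  case/eq_block_mx: hG => eul eur _ _.
  exists (drsubmx G, dlsubmx G); last by rewrite gmE /= -eul -eur submxK.
  have uG2 := uG; rewrite -(submxK G) eur eul unitmxE det_lblock det1 mul1r -unitmxE in uG2.
  exact: uG2.
Qed.

Lemma Aprops (F : fieldType) (l m d n N : nat) (e1 : (l + m)%N = n) (e2 : (l + d)%N = N)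
  (B : 'M[F]_(m, l)) (C : 'M[F]_(m, d)) : \rank C = d ->
  row_full (conform_mx (0 : 'M[F]_(n, N)) (block_mx (1%:M : 'M[F]_l) 0 B C)).
Proof.
case: n / e1; case: N / e2 => hC; rewrite conform_mx_id.
have /row_fullP [L hL] : row_full C by rewrite /row_full hC.
apply/row_fullP; exists (block_mx 1%:M 0 (- (L *m B)) L).
rewrite mulmx_block ?mul1mx ?mul0mx ?addr0 ?mulmx0 ?add0r hL mulNmx mulmx1 addNr.
by rewrite -scalar_mx_block.
Qed.

Lemma uprob_congr (T : finType) (D D' E E' : pred T) :
  (forall x, D x = D' x) -> (forall x, D x -> E x = E' x) -> uprob T D E = uprob T D' E'.
Proof.
move=> hD hE; rewrite /uprob; congr (_%:R / _%:R); apply: eq_card => x; rewrite !inE -hD.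
  by case hx: (D x) => //=; rewrite hE.
by [].
Qed.

Lemma ColSpanSel_tr m k (A : 'M['F_2]_(m, k)) (P : pred nat) :
  (ColSpanSel m k A P)^T = A *m dsel 'F_2 (fun j : 'I_k => P j.+1).
Proof.
apply/matrixP => i j; rewrite /dsel mul_mx_diag !mxE.
by case: (P j.+1); rewrite ?mulr1 ?mulr0.
Qed.

Theorem mainTheorem2 (n r s l : nat)
    (B : 'M['F_2]_(n - l, l)) (C : 'M['F_2]_(n - l, n - r - l)) :
  (0 < n)%N -> (0 < r)%N -> (0 < s)%N -> (0 < l)%N -> (r + s + l <= n)%N ->
  \rank C = (n - r - l)%N ->
  forall T : 'I_l.+1 -> 'M['F_2]_n,
    uprob _ (good1 n r s l (Amx n r l B C))
          (fun V => [forall j, (out1 n r s l (Amx n r l B C) V j == T j)%MS])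
    = uprob _ (good2 n r l)
          (fun MM => [forall j, (out2 n r s l (Amx n r l B C) MM j == T j)%MS]).
Proof.
move=> hn hr hs hl hsum hC T.
have e1 : (l + (n - l))%N = n by lia.
have e2 : (l + (n - r - l))%N = (n - r)%N by lia.
have hls : (l + s <= n - r)%N by lia.
have hA := @Aprops _ l (n - l) (n - r - l) n (n - r) e1 e2 B C hC.
have [gm1 gm2 gm3] := Gprops 'F_2 e2.
have H := @gen n (n - r) l s (n - r - l) (Amx n r l B C) (fun MM => Gmx n r l MM.2 MM.1) T hA hls gm1 gm2 gm3.
have hSj : forall j0 : 'I_l.+1, Sj n r l (Amx n r l B C) j0 = kermx (Amx n r l B C *m Dge 'F_2 (n - r) j0).
  move=> j0; rewrite /Sj /perpmx /ColSpanRange ColSpanSel_tr; congr (kermx (_ *m _)).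
  by apply: eq_dsel => k /=; move: (ltn_ord k) => hk; apply/idP/idP; lia.
rewrite (@uprob_congr _ _
   (fun V : 'M['F_2]_(s, n) => row_free V && (V :&: kermx (Amx n r l B C *m Dge _ (n - r) l) == (0 : 'M['F_2]_n))%MS) _
   (fun V => [forall j : 'I_l.+1, (kermx (Amx n r l B C *m Dge _ (n - r) j) + V == T j)%MS])); last first.
  by move=> V _; apply: eq_forallb => j; rewrite /out1 hSj.
  by move=> V; rewrite /good1 hSj.
rewrite H; apply: uprob_congr => [MM|MM _]; first by [].
apply: eq_forallb => j.
rewrite /out2 /perpmx ColSpanSel_tr.
rewrite (@eq_dsel _ _ _ (fun k : 'I_(n - r) => (j <= k < l)%N || (l + s <= k)%N)); first by [].
by move=> k /=; move: (ltn_ord k) => hk; apply/idP/idP; lia.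
Qed.
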